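(* Let $A$ be an artinian local ring with infinite residue field, $S$ a finitely generated standard $\mathbb N^d$-graded algebra over $A$, and let $0\to M'\to M\to M''\to0$ be an exact sequence of finitely generated $\mathbb N^d$-graded $S$-modules. Let $\mathbf x$ be a sequence of elements in $\bigcup_{i=1}^dS_i$. Then $\mathbf x$ is a mixed multiplicity system of $M$ if and only if $\mathbf x$ is a mixed multiplicity system of both $M'$ and $M''$.
   Context: $S$ standard: $S_{\mathbf 0}=A$, generated by $S_i:=S_{\mathbf e_i}$. $S_{++}=\bigoplus_{\mathbf n\ge\mathbf 1}S_{\mathbf n}$; for a graded module $F$, $\mathrm{Supp}_{++}F$ is the set of homogeneous primes $P$ of $S$ not containing $S_{++}$ with $F_P\ne0$ (dimension $-\infty$ if empty). A sequence $\mathbf x$ of elements of $\bigcup_jS_j$ is a mixed multiplicity system of $F$ if $\dim\mathrm{Supp}_{++}(F/\mathbf xF)\le0$ (with $\mathbf xF=0$ for empty $\mathbf x$). *)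

(* Defs.v *)
From HB Require Import structures.
From mathcomp Require Import all_boot all_order all_algebra.
Set Implicit Arguments. Unset Strict Implicit. Unset Printing Implicit Defensive.
Import Order.TTheory GRing.Theory Num.Theory.
Local Open Scope ring_scope.

Definition ndeg (d : nat) := {ffun 'I_d -> nat}.
Definition ndeg0 (d : nat) : ndeg d := [ffun=> 0%N].
Definition ndegD (d : nat) (m n : ndeg d) : ndeg d := [ffun i => (m i + n i)%N].
Definition ndege (d : nat) (i : 'I_d) : ndeg d := [ffun j => nat_of_bool (j == i)].

Definition is_ideal (R : comNzRingType) (I : {pred R}) : Prop :=
  [/\ 0 \in I,
      (forall a b, a \in I -> b \in I -> a + b \in I) &
      (forall r a, a \in I -> r * a \in I)].

Definition is_proper_ideal (R : comNzRingType) (I : {pred R}) : Prop :=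
  is_ideal I /\ 1 \notin I.

Definition is_maximal_ideal (R : comNzRingType) (I : {pred R}) : Prop :=
  is_proper_ideal I /\
  forall J : {pred R}, is_ideal J -> {subset I <= J} -> J =i I \/ 1 \in J.

Definition is_prime_ideal (R : comNzRingType) (I : {pred R}) : Prop :=
  is_proper_ideal I /\ forall a b, a * b \in I -> a \in I \/ b \in I.

Definition artinian (R : comNzRingType) : Prop :=
  forall I : nat -> {pred R}, (forall n, is_ideal (I n)) ->
    (forall n, {subset I n.+1 <= I n}) ->
    exists N, forall n, (N <= n)%N -> I n =i I N.

(* Local ring (unique maximal ideal m) whose residue field R/m is infinite
   (there are infinitely many pairwise distinct classes modulo m). *)
Definition local_infinite_residue (R : comNzRingType) : Prop :=
  exists m : {pred R},
    [/\ is_maximal_ideal m,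
        (forall m' : {pred R}, is_maximal_ideal m' -> m' =i m) &
        exists f : nat -> R, forall i j, i != j -> f i - f j \notin m].

Definition graded_decomp (d : nat) (V : zmodType) (G : ndeg d -> {pred V}) : Prop :=
  [/\ (forall n, 0 \in G n),
      (forall n a b, a \in G n -> b \in G n -> a - b \in G n),
      (forall v, exists (ns : seq (ndeg d)) (c : ndeg d -> V),
          uniq ns /\ (forall n, c n \in G n) /\ v = \sum_(n <- ns) c n) &
      (forall (ns : seq (ndeg d)) (c : ndeg d -> V), uniq ns ->
          (forall n, c n \in G n) -> \sum_(n <- ns) c n = 0 ->
          forall n, n \in ns -> c n = 0)].

Definition in_subalg_gen (A : comNzRingType) (S : comAlgType A)
  (gen : S -> Prop) (s : S) : Prop :=
  forall P : S -> Prop,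
    (forall a : A, P (a%:A)) -> (forall g, gen g -> P g) ->
    (forall u v, P u -> P v -> P (u + v)) ->
    (forall u v, P u -> P v -> P (u * v)) -> P s.

Definition fg_standard_graded_algebra (A : comNzRingType) (S : comAlgType A)
  (d : nat) (Sg : ndeg d -> {pred S}) : Prop :=
  [/\ graded_decomp Sg,
      1 \in Sg (ndeg0 d),
      (forall m n a b, a \in Sg m -> b \in Sg n -> a * b \in Sg (ndegD m n)),
      ((forall s, s \in Sg (ndeg0 d) <-> exists a : A, s = a%:A) /\
       injective (fun a : A => (a%:A : S))) &
      exists gens : seq S,
        (forall g, g \in gens -> exists i, g \in Sg (ndege i)) /\
        (forall s, in_subalg_gen (fun g => g \in gens) s)].

Definition fg_graded_module (A : comNzRingType) (S : comAlgType A)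
  (d : nat) (Sg : ndeg d -> {pred S}) (M : lmodType S)
  (Mg : ndeg d -> {pred M}) : Prop :=
  [/\ graded_decomp Mg,
      (forall m n (s : S) (v : M), s \in Sg m -> v \in Mg n ->
          s *: v \in Mg (ndegD m n)) &
      exists gens : seq M, forall v : M,
        exists c : M -> S, v = \sum_(g <- gens) c g *: g].

Definition graded_map (d : nat) (S : nzRingType) (M N : lmodType S)
  (Mg : ndeg d -> {pred M}) (Ng : ndeg d -> {pred N}) (f : M -> N) : Prop :=
  forall n v, v \in Mg n -> f v \in Ng n.

Definition homogeneous_prime (A : comNzRingType) (S : comAlgType A)
  (d : nat) (Sg : ndeg d -> {pred S}) (P : {pred S}) : Prop :=
  is_prime_ideal P /\
  forall s, s \in P -> exists (ns : seq (ndeg d)) (c : ndeg d -> S),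
    (forall n, c n \in Sg n /\ c n \in P) /\ s = \sum_(n <- ns) c n.

Definition not_contain_Spp (A : comNzRingType) (S : comAlgType A)
  (d : nat) (Sg : ndeg d -> {pred S}) (P : {pred S}) : Prop :=
  exists (n : ndeg d) (s : S), (forall i, (1 <= n i)%N) /\ s \in Sg n /\ s \notin P.

Definition in_xF (S : nzRingType) (F : lmodType S) (x : seq S) (v : F) : Prop :=
  exists m : 'I_(size x) -> F, v = \sum_(i < size x) x`_i *: m i.

(* (F/xF)_P <> 0, unfolded: some class m + xF has nonzero image m/1 in the
   localization, i.e. s m \notin xF for every s \notin P. *)
Definition loc_quot_nonzero (S : nzRingType) (F : lmodType S) (x : seq S)
  (P : {pred S}) : Prop :=
  exists m : F, forall s : S, s \notin P -> ~ in_xF x (s *: m).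

Definition supp_pp (A : comNzRingType) (S : comAlgType A)
  (d : nat) (Sg : ndeg d -> {pred S}) (F : lmodType S) (x : seq S)
  (P : {pred S}) : Prop :=
  [/\ homogeneous_prime Sg P, not_contain_Spp Sg P & loc_quot_nonzero F x P].

(* dim X <= k for a set X of prime ideals (dimension = supremum of lengths
   of strict chains of primes in X, -oo if X is empty): there is no strict
   chain P_0 < P_1 < ... < P_(k+1) in X. *)
Definition dim_le (S : nzRingType) (X : {pred S} -> Prop) (k : nat) : Prop :=
  forall c : nat -> {pred S},
    (forall i, (i <= k.+1)%N -> X (c i)) ->
    (forall i, (i <= k)%N ->
       {subset c i <= c i.+1} /\ exists s, s \in c i.+1 /\ s \notin c i) ->
    False.

Definition mm_system (A : comNzRingType) (S : comAlgType A)
  (d : nat) (Sg : ndeg d -> {pred S}) (F : lmodType S) (x : seq S) : Prop :=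
  dim_le (supp_pp Sg F x) 0.

(* Main.v *)
Require Import Defs.
From Stdlib Require Import Classical IndefiniteDescription.
From HB Require Import structures.
From mathcomp Require Import all_boot all_order all_algebra.
Import GRing.Theory.
Local Open Scope ring_scope.

Lemma P0 (R : comNzRingType) (P : {pred R}) (HP : is_prime_ideal P) : 0 \in P.
Proof. by case: HP => [[[H0 HD HM]]]. Qed.
Lemma P1 (R : comNzRingType) (P : {pred R}) (HP : is_prime_ideal P) : 1 \notin P.
Proof. by case: HP => [[]]. Qed.
Lemma PD (R : comNzRingType) (P : {pred R}) (HP : is_prime_ideal P) a b :
  a \in P -> b \in P -> a + b \in P.
Proof. by case: HP => [[[H0 HD HM]]] _ _; apply: HD. Qed.
Lemma PM (R : comNzRingType) (P : {pred R}) (HP : is_prime_ideal P) r a :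
  a \in P -> r * a \in P.
Proof. by case: HP => [[[H0 HD HM]]] _ _; apply: HM. Qed.
Lemma Pprod (R : comNzRingType) (P : {pred R}) (HP : is_prime_ideal P) a b :
  a \notin P -> b \notin P -> a * b \notin P.
Proof.
move=> /negP Ha /negP Hb; apply/negP => H.
by case: HP => _ /(_ _ _ H) [].
Qed.
Lemma Psum (R : comNzRingType) (P : {pred R}) (HP : is_prime_ideal P)
  (I : Type) (r : seq I) (F : I -> R) :
  (forall i, F i \in P) -> \sum_(i <- r) F i \in P.
Proof.
move=> HF; elim: r => [|i r IH]; rewrite ?big_nil ?big_cons; [exact: P0 | exact: PD].
Qed.

Lemma nak (R : comNzRingType) (M : lmodType R) (P : {pred R})
  (HP : is_prime_ideal P) (gs : seq M) :
  (forall g, g \in gs -> exists s, s \notin P /\ exists a : M -> R,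
     (forall h, a h \in P) /\ s *: g = \sum_(h <- gs) a h *: h) ->
  exists t, t \notin P /\ forall g, g \in gs -> t *: g = 0.
Proof.
elim: gs => [|g gs IH] H.
  by exists 1; split; [exact: P1|].
have [s [sP [a [aP Hs]]]] := H g (mem_head _ _).
rewrite big_cons in Hs.
set u := s - a g.
have uP : u \notin P.
  apply/negP => uin; move/negP: sP; apply.
  have -> : s = u + a g by rewrite /u subrK.
  exact: PD.
have Hu : u *: g = \sum_(h <- gs) a h *: h by rewrite /u scalerBl Hs addrC addKr.
have [t [tP Ht]] : exists t, t \notin P /\ forall g', g' \in gs -> t *: g' = 0.
  apply: IH => g' g'in.
  have [s' [s'P [b [bP Hb]]]] := H g' (mem_behead (s := g :: gs) g'in).
  exists (u * s'); split; first exact: Pprod.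
  exists (fun h => b g * a h + u * b h); split.
    by move=> h; apply: PD => //; apply: PM.
  rewrite -scalerA Hb big_cons scalerDr scalerA [u * _]mulrC -scalerA Hu.
  rewrite !scaler_sumr -big_split /=; apply: eq_bigr => h _.
  by rewrite !scalerA scalerDl.
exists (t * u); split; first exact: Pprod.
move=> g'; rewrite in_cons => /orP[/eqP->|g'in].
  rewrite -scalerA Hu scaler_sumr big_seq big1 // => h hin.
  by rewrite scalerA mulrC -scalerA Ht ?scaler0.
by rewrite mulrC -scalerA Ht // scaler0.
Qed.

Lemma L1 (R : comNzRingType) (M M2 : lmodType R) (g : {linear M -> M2})
  (x : seq R) (P : {pred R}) :
  (forall w, exists v, g v = w) -> loc_quot_nonzero M2 x P -> loc_quot_nonzero M x P.
Proof.
move=> gs [m2 Hm2]; have [m Em] := gs m2; subst m2.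
exists m => s sP [mm Hmm]; apply: (Hm2 s sP); exists (fun i => g (mm i)).
rewrite -linearZ Hmm linear_sum; by apply: eq_bigr => i _; rewrite linearZ_LR.
Qed.

Lemma L3 (R : comNzRingType) (M1 M M2 : lmodType R) (f : {linear M1 -> M})
  (g : {linear M -> M2}) (x : seq R) (P : {pred R}) (HP : is_prime_ideal P) :
  (forall w, exists v, g v = w) -> (forall v, g v = 0 <-> exists u, f u = v) ->
  loc_quot_nonzero M x P -> loc_quot_nonzero M1 x P \/ loc_quot_nonzero M2 x P.
Proof.
move=> gs ex [m Hm].
case: (classic (loc_quot_nonzero M2 x P)) => [|N2]; [by right|left].
have [s [sP [w Hw]]] : exists s, s \notin P /\ in_xF x (s *: g m).
  apply: NNPP => H; apply: N2; exists (g m) => s sP Hx; apply: H; by exists s.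
have [G HG] := functional_choice (fun w v => g v = w) gs.
have [u Hu] : exists u, f u = s *: m - \sum_(i < size x) x`_i *: G (w i).
  apply: (ex _).1; rewrite linearB linear_sum /= linearZ /= Hw.
  apply/eqP; rewrite subr_eq0; apply/eqP; apply: eq_bigr => i _.
  by rewrite linearZ /= HG.
have Hsm : s *: m = f u + \sum_(i < size x) x`_i *: G (w i) by rewrite Hu subrK.
exists u => t tP [uu Huu].
apply: (Hm (t * s)); first exact: Pprod.
exists (fun i => f (uu i) + t *: G (w i)).
rewrite -scalerA Hsm scalerDr -linearZ Huu linear_sum scaler_sumr -big_split.
apply: eq_bigr => i _ /=.
by rewrite linearZ /= scalerDr !scalerA mulrC.
Qed.

Lemma L2 (R : comNzRingType) (M1 M : lmodType R) (f : {linear M1 -> M})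
  (x : seq R) (P : {pred R}) (HP : is_prime_ideal P) :
  injective f ->
  (exists gens : seq M, forall v, exists c : M -> R, v = \sum_(g <- gens) c g *: g) ->
  loc_quot_nonzero M1 x P -> loc_quot_nonzero M x P.
Proof.
move=> finj [gens Hgen] [u0 Hu0].
have xP : forall i : 'I_(size x), x`_i \in P.
  move=> i; apply: NNPP => /negP xi; apply: (Hu0 _ xi).
  exists (fun j => if j == i then u0 else 0).
  rewrite (bigD1 i) //= eqxx big1 ?addr0 // => j /negbTE ->; exact: scaler0.
apply: NNPP => N.
have H : forall m : M, exists s, s \notin P /\ in_xF x (s *: m).
  move=> m; apply: NNPP => H; apply: N; exists m => s sP Hx; apply: H; by exists s.
have [C HC] := functional_choice _ Hgen.
have [t [tP Ht]] : exists t, t \notin P /\ forall g, g \in gens -> t *: g = 0.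
  apply: (@nak _ _ P HP gens) => g _.
  have [s [sP [mm Hmm]]] := H g.
  exists s; split => //.
  exists (fun h => \sum_(i < size x) x`_i * C (mm i) h); split.
    move=> h; apply: (@Psum _ P HP) => i; rewrite mulrC; exact: (@PM _ P HP _ _ (xP i)).
  rewrite Hmm; under eq_bigr => i _ do rewrite {1}(HC (mm i)) scaler_sumr.
  rewrite exchange_big /=; apply: eq_bigr => h _; rewrite scaler_suml.
  by apply: eq_bigr => i _; rewrite scalerA.
apply: (Hu0 t tP); exists (fun=> 0).
have -> : t *: u0 = 0.
  apply: finj; rewrite linearZ_LR linear0.
  rewrite (HC (f u0)) scaler_sumr big_seq big1 // => h hin.
  by rewrite scalerA mulrC -scalerA Ht // scaler0.
by rewrite big1 // => i _; rewrite scaler0.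
Qed.

Lemma up (R : comNzRingType) (M : lmodType R) x (P Q : {pred R}) :
  {subset P <= Q} -> loc_quot_nonzero M x P -> loc_quot_nonzero M x Q.
Proof.
move=> PQ [m Hm]; exists m => s sQ; apply: Hm; apply/negP => /PQ; exact/negP.
Qed.

Theorem lemma3p4 (A : comNzRingType) (S : comAlgType A) (d : nat)
  (Sg : ndeg d -> {pred S})
  (M1 M M2 : lmodType S)
  (M1g : ndeg d -> {pred M1}) (Mg : ndeg d -> {pred M}) (M2g : ndeg d -> {pred M2})
  (f : {linear M1 -> M}) (g : {linear M -> M2})
  (x : seq S) :
  artinian A -> local_infinite_residue A ->
  fg_standard_graded_algebra Sg ->
  fg_graded_module Sg M1g -> fg_graded_module Sg Mg -> fg_graded_module Sg M2g ->
  graded_map M1g Mg f -> graded_map Mg M2g g ->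
  injective f -> (forall w : M2, exists v : M, g v = w) ->
  (forall v : M, g v = 0 <-> exists u : M1, f u = v) ->
  (forall s, s \in x -> exists i : 'I_d, s \in Sg (ndege i)) ->
  mm_system Sg M x <-> (mm_system Sg M1 x /\ mm_system Sg M2 x).
Proof.
move=> _ _ _ _ [_ _ genM] _ _ _ finj gsurj gex _.
split.
  move=> HM; split => c Hc Hch; apply: (HM c _ Hch) => i /Hc [hp nc lq]; split => //.
    exact: (@L2 _ _ _ f x _ hp.1 finj genM lq).
  exact: (@L1 _ _ _ g x _ gsurj lq).
move=> [H1 H2] c Hc Hch.
have [hp nc lq] := Hc 0%N isT.
have [hp1 nc1 lq1] := Hc 1%N isT.
have [sub _] := Hch 0%N isT.
case: (@L3 _ _ _ _ f g x _ hp.1 gsurj gex lq) => [l1|l2].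
  by apply: (H1 c _ Hch) => -[|[|i]] // _; split => //; exact: (@up _ _ x _ _ sub l1).
by apply: (H2 c _ Hch) => -[|[|i]] // _; split => //; exact: (@up _ _ x _ _ sub l2).
Qed.
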